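(* Let $G$ be a graph with parameters $(r_2,r_3)$ and let $e$ be an edge of $G$ with $K_3\deg(e)=k$. Then \[2r_3 \leq (r_2-k-1)(r_2-2) + k(k+1).\]
   Context: All graphs are finite, simple and undirected. For a vertex $v$, $K_3\deg(v)$ is the number of triangles of $G$ containing $v$; for an edge $uv$, $K_3\deg(uv)=|N(u)\cap N(v)|$ is the number of triangles containing the edge $uv$, where $N(\cdot)$ denotes the open neighbourhood. A graph $G$ has parameters $(r_2,r_3)$ if every vertex has degree $r_2$ and every vertex has $K_3$-degree $r_3$. *)

(* Defs.v *)
From mathcomp Require Import all_boot all_order all_algebra.
Set Implicit Arguments. Unset Strict Implicit. Unset Printing Implicit Defensive.

Definition simple_graph (T : finType) (g : rel T) : Prop :=
  symmetric g /\ irreflexive g.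

Definition nbhd (T : finType) (g : rel T) (v : T) : {set T} := [set w | g v w].

Definition deg (T : finType) (g : rel T) (v : T) : nat := #|nbhd g v|.

Definition is_triangle (T : finType) (g : rel T) (S : {set T}) : bool :=
  (#|S| == 3) && [forall x in S, forall y in S, (x != y) ==> g x y].

Definition K3deg (T : finType) (g : rel T) (v : T) : nat :=
  #|[set S : {set T} | is_triangle g S & v \in S]|.

Definition K3deg_edge (T : finType) (g : rel T) (u v : T) : nat :=
  #|nbhd g u :&: nbhd g v|.

Definition has_params (T : finType) (g : rel T) (r2 r3 : nat) : Prop :=
  forall v : T, deg g v = r2 /\ K3deg g v = r3.

(* Main.v *)
Require Import Defs.
From mathcomp Require Import all_boot all_order all_algebra.
From mathcomp Require Import zify.
Import GRing.Theory Num.Theory.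

Lemma sum_ind (T : finType) (A B : {set T}) :
  \sum_(x in A) (x \in B : nat) = #|A :&: B|.
Proof.
rewrite -sum1_card [RHS]big_mkcond [LHS]big_mkcond /=.
apply: eq_bigr => x _; rewrite in_setI; by case: (x \in A); case: (x \in B).
Qed.

Lemma tri_count (T : finType) (g : rel T) (w : T) :
  symmetric g -> irreflexive g ->
  (2 * K3deg g w = \sum_(x in nbhd g w) #|nbhd g x :&: nbhd g w|)%N.
Proof.
move=> gs gi.
set Tw := [set S : {set T} | is_triangle g S & w \in S].
have clq : forall S, S \in Tw -> forall a b, a \in S -> b \in S -> a != b -> g a b.
  move=> S; rewrite inE => /andP [/andP [_ /forallP H] _] a b aS bS ab.
  by move: (H a); rewrite aS /= => /forallP /(_ b); rewrite bS ab.
have c3 : forall S, S \in Tw -> #|S| = 3.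
  by move=> S; rewrite inE => /andP [/andP [/eqP -> _] _].
have wS : forall S, S \in Tw -> w \in S.
  by move=> S; rewrite inE => /andP [_ ->].
have gne : forall a b, g a b -> a != b.
  by move=> a b gab; apply/eqP => E; subst; rewrite gi in gab.
have step1 : forall x, x \in nbhd g w ->
   #|nbhd g x :&: nbhd g w| = #|[set S in Tw | x \in S]|.
  move=> x; rewrite inE => gwx.
  have -> : [set S in Tw | x \in S] =
     [set w |: (x |: [set y]) | y in nbhd g x :&: nbhd g w].
    apply/setP => S; apply/idP/idP.
    - rewrite inE => /andP [ST xS].
      have wx : w != x by apply: gne.
      have : #|S :\ w :\ x| == 1.
        have H := c3 _ ST; rewrite (cardsD1 w) wS // (cardsD1 x (S :\ w)) !inE eq_sym wx xS /= in H.
        by move: H => /eqP; rewrite !add1n !eqSS.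
      move=> /cards1P [y Hy].
      have yS : y \in S :\ w :\ x by rewrite Hy inE.
      move: (yS); rewrite !inE => /andP [yx /andP [yw yS']].
      apply/imsetP; exists y.
        rewrite !inE; apply/andP; split.
          by apply: (clq S ST) => //; rewrite eq_sym.
        by apply: (clq S ST) => //; [apply: wS | rewrite eq_sym].
      rewrite -Hy setD1K; first by rewrite setD1K // wS.
      by rewrite !inE xS andbT eq_sym.
    - move=> /imsetP [y]; rewrite !inE => /andP [gxy gwy] ->.
      rewrite !inE !eqxx /= orbT !andbT.
      rewrite /is_triangle; apply/andP; split.
        rewrite !cardsU1 cards1 !inE negb_or.
        rewrite (gne _ _ gwx) (gne _ _ gwy) (gne _ _ gxy) //.
      apply/forallP => a; apply/implyP => aS; apply/forallP => b; apply/implyP => bS.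
      apply/implyP => ab.
      move: aS bS ab; rewrite !inE => /or3P [] /eqP -> /or3P [] /eqP -> //; rewrite ?eqxx //;
        rewrite ?gwx ?gwy ?gxy // => _; by rewrite gs.
  rewrite card_in_imset //.
  move=> y1 y2; rewrite !inE => /andP [g1 g1'] /andP [g2 g2'] E.
  have : y1 \in w |: (x |: [set y2]) by rewrite -E !inE eqxx !orbT.
  rewrite !inE => /or3P [] /eqP // E1; subst.
  - by rewrite gi in g1'.
  - by rewrite gi in g1.
rewrite (eq_bigr _ step1).
have e2 : forall x, #|[set S in Tw | x \in S]| = \sum_(S in Tw) (x \in S : nat).
  move=> x; rewrite (eq_bigr (fun S : {set T} => (S \in [set S0 : {set T} | x \in S0]) : nat)).
    by rewrite sum_ind; apply: eq_card => S; rewrite !inE.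
  by move=> S _; rewrite inE.
rewrite (eq_bigr _ (fun x _ => e2 x)) exchange_big /=.
rewrite (eq_bigr (fun _ => 2)).
  by rewrite sum_nat_const mulnC.
move=> S ST; rewrite sum_ind.
have -> : nbhd g w :&: S = S :\ w.
  apply/setP => z; rewrite !inE; case: (eqVneq z w) => [->|zw] /=.
    by rewrite gi.
  case zS: (z \in S); rewrite ?andbF ?andbT //.
  by apply: (clq S ST) => //; [apply: wS | rewrite eq_sym].
have H := c3 S ST; rewrite (cardsD1 w) wS // in H.
by move: H => /eqP; rewrite add1n eqSS => /eqP.
Qed.

Lemma cardU_le (T : finType) (A B : {set T}) : #|A :|: B| <= #|A| + #|B|.
Proof. by rewrite cardsU leq_subr. Qed.

Lemma swap_count (T : finType) (g : rel T) (A B : {set T}) : symmetric g ->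
  \sum_(x in A) #|nbhd g x :&: B| = \sum_(y in B) #|nbhd g y :&: A|.
Proof.
move=> gs.
under eq_bigr => x _ do rewrite setIC -sum_ind.
rewrite exchange_big /=.
apply: eq_bigr => y _; rewrite setIC -sum_ind; apply: eq_bigr => x _.
by rewrite !inE gs.
Qed.

Lemma side (T : finType) (g : rel T) (u v : T) : symmetric g -> irreflexive g -> g u v ->
  2 * K3deg g u <= #|nbhd g v :&: nbhd g u|
     + \sum_(c in nbhd g u :&: nbhd g v) #|nbhd g c :&: nbhd g u|
     + \sum_(c in nbhd g u :&: nbhd g v) #|nbhd g c :&: (nbhd g u :\: nbhd g v :\ v)|
     + #|nbhd g u :\: nbhd g v :\ v| * (#|nbhd g u :\: nbhd g v :\ v| - 1).
Proof.
move=> gs gi guv.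
set C := nbhd g u :&: nbhd g v. set D := nbhd g u :\: nbhd g v :\ v.
rewrite tri_count // (big_setID (nbhd g v)) /= (@big_setD1 _ _ _ _ v (nbhd g u :\: nbhd g v)); last first.
  by rewrite !inE guv gi.
have H : \sum_(x in D) #|nbhd g x :&: nbhd g u| <=
         \sum_(x in D) (#|nbhd g x :&: C| + (#|D| - 1)).
  apply: leq_sum => x xD.
  have xD' := xD; rewrite !inE in xD'; case/andP: xD' => xv /andP [gvx gux].
  apply: (@leq_trans #|(nbhd g x :&: C) :|: (nbhd g x :&: (D :\ x))|).
    apply: subset_leq_card; apply/subsetP => y; rewrite !inE => /andP [gxy guy].
    rewrite gxy guy /=.
    case gvy: (g v y) => //=.
    rewrite andbT; apply/andP; split.
      by apply/eqP => E; subst; rewrite gi in gxy.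
    by apply/eqP => E; subst; rewrite gs gxy in gvx.
  apply: (leq_trans (cardU_le _ _ _)); rewrite leq_add2l.
  rewrite (cardsD1 x D) xD add1n subn1 /=.
  by apply: subset_leq_card; apply: subsetIr.
rewrite big_split /= sum_nat_const (swap_count _ _ D C gs) in H.
rewrite -/C -/D /=. lia.
Qed.

Lemma perc (T : finType) (g : rel T) (r2 : nat) (u v c : T) :
  symmetric g -> irreflexive g -> deg g c = r2 -> g c u ->
  #|nbhd g c :&: nbhd g u| + #|nbhd g c :&: (nbhd g v :\: nbhd g u :\ u)| <= r2 - 1.
Proof.
move=> gs gi dc gcu.
rewrite -cardsUI.
have -> : (nbhd g c :&: nbhd g u) :&: (nbhd g c :&: (nbhd g v :\: nbhd g u :\ u)) = set0.
  apply/setP => z; rewrite !inE.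
  by case: (g u z); rewrite ?andbF ?andbT //= andbF.
rewrite cards0 addn0 -dc /deg (cardsD1 u (nbhd g c)) inE gcu add1n subn1 /=.
apply: subset_leq_card; apply/subsetP => z; rewrite !inE.
case/orP => /andP [gcz H]; rewrite gcz andbT.
  by apply/eqP => E; subst; rewrite gi in H.
by move: H => /andP [].
Qed.

Lemma sizeN (T : finType) (g : rel T) (u v : T) : irreflexive g -> g u v ->
  #|nbhd g u| = 1 + #|nbhd g u :&: nbhd g v| + #|nbhd g u :\: nbhd g v :\ v|.
Proof.
move=> gi guv.
rewrite -(cardsID (nbhd g v) (nbhd g u)) (cardsD1 v (nbhd g u :\: nbhd g v)).
by rewrite !inE gi guv /=; lia.
Qed.

Arguments side {T g u v}. Arguments sizeN {T g u v}. Arguments perc {T g r2 u v c}.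
Local Open Scope ring_scope.

Theorem lemma3p4 (T : finType) (g : rel T) (r2 r3 : nat) (u v : T) (k : nat) :
  simple_graph g -> has_params g r2 r3 -> g u v -> K3deg_edge g u v = k ->
  2 * (r3%:Z) <= (r2%:Z - k%:Z - 1) * (r2%:Z - 2) + k%:Z * (k%:Z + 1).
Proof.
move=> [gs gi] P guv Hk.
have gvu : g v u by rewrite gs.
have [du tu] := P u. have [dv tv] := P v.
have H1 := side gs gi guv.
have H2 := side gs gi gvu.
rewrite (setIC (nbhd g v) (nbhd g u)) in H2.
rewrite (setIC (nbhd g v) (nbhd g u)) in H1.
have S1 := sizeN gi guv. have S2 := sizeN gi gvu.
rewrite (setIC (nbhd g v) (nbhd g u)) in S2.
set C := nbhd g u :&: nbhd g v in H1 H2 S1 S2.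
set D := nbhd g u :\: nbhd g v :\ v in H1 H2 S1 S2.
set D' := nbhd g v :\: nbhd g u :\ u in H1 H2 S1 S2.
have kC : #|C| = k by [].
have B1 : (\sum_(c in C) #|nbhd g c :&: nbhd g u| + \sum_(c in C) #|nbhd g c :&: D'|
            <= #|C| * (r2 - 1))%N.
  rewrite -big_split -sum_nat_const /=; apply: leq_sum => c.
  rewrite !inE => /andP [guc _]; apply: perc => //; [exact: (P c).1 | by rewrite gs].
have B2 : (\sum_(c in C) #|nbhd g c :&: nbhd g v| + \sum_(c in C) #|nbhd g c :&: D|
            <= #|C| * (r2 - 1))%N.
  rewrite -big_split -sum_nat_const /=; apply: leq_sum => c.
  rewrite !inE => /andP [_ gvc]; apply: perc => //; [exact: (P c).1 | by rewrite gs].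
move: du dv tu tv; rewrite /deg /K3deg_edge => du dv tu tv.
rewrite tu in H1; rewrite tv in H2.
rewrite kC in H1 H2 S1 S2 B1 B2.
rewrite du in S1; rewrite dv in S2.
have ED : #|D'| = #|D| by lia.
rewrite ED in H2 B1.
move: H1 H2 B1 B2 S1.
set a1 := \sum_(c in C) _. set a2 := \sum_(c in C) _. set a3 := \sum_(c in C) _. set a4 := \sum_(c in C) _.
move: #|D| => d.
move=> H1 H2 B1 B2 S1.
subst r2.
have H : (4 * r3 <= 2 * k + 2 * (k * (k + d)) + 2 * (d * (d - 1)))%N.
  have E : (#|nbhd g u| - 1 = k + d)%N by lia.
  rewrite E in B1 B2; lia.
rewrite S1; clear -H.
case: d H => [|d] H; rewrite ?subn1 /= in H; nia.
Qed.
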